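(* Let $S=\{(x_1,x_2)\in\mathbb{R}^2:x_2-x_1^2\ge0\}$, $\tilde S^{o}=\{(x_0,x_1,x_2):x_0x_2-x_1^2\ge0,\ x_0>0\}$, $\tilde S^{c}=\{(x_0,x_1,x_2):x_0x_2-x_1^2\ge0,\ x_0\ge0\}$, and $\tilde G=\{X_0,\ X_0X_2-X_1^2,\ X_0^2+X_1^2+X_2^2-1,\ 1-X_0^2-X_1^2-X_2^2\}$. Then $X_0+X_2>0$ on $\mathrm{conv}(\overline{\tilde S^{o}})\setminus\{0\}$ (so this cone is closed and pointed), $\tilde S^{c}\setminus\overline{\tilde S^{o}}=\{(0,0,x_2):x_2<0\}\neq\emptyset$ (so $S$ is not closed at $\infty$), and $\widetilde{\mathrm{TH}}_k(\tilde G)=\mathbb{R}^2$ for every $k\ge1$; in particular $\bigcap_k\widetilde{\mathrm{TH}}_k(\tilde G)\neq\overline{\mathrm{conv}(S)}=S$.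
   Context: For a finite set $H$ of polynomials, $\mathcal{Q}_k(H)=\{\sum_{j}\sigma_jh_j:h_0=1,\ \sigma_j\text{ sums of squares},\ \deg(\sigma_jh_j)\le2k\}$. $\widetilde{\mathrm{TH}}_k(\tilde G)=\{(x_1,x_2):\tilde l(1,x_1,x_2)\ge0\ \forall\tilde l\in\mathcal{Q}_k(\tilde G)\text{ that is a linear form in }(X_0,X_1,X_2)\text{ or }0\}$. A closed convex cone $K$ is pointed if $K\cap(-K)=\{0\}$; $S$ is closed at $\infty$ if $\overline{\tilde S^{o}}=\tilde S^{c}$. *)

(* Defs.v *)
(* The ambient field is an arbitrary real field R
   (the paper's R is the instance R = reals). *)
From HB Require Import structures.
From mathcomp Require Import all_boot all_order all_algebra.
Set Implicit Arguments. Unset Strict Implicit. Unset Printing Implicit Defensive.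
Import Order.TTheory GRing.Theory Num.Theory.
Local Open Scope ring_scope.

Section Defs.
Variable R : realFieldType.

Definition cmp {n} (x : 'rV[R]_n) (i : 'I_n) : R := x 0 i.

Definition i0 : 'I_3 := @Ordinal 3 0 isT.
Definition i1 : 'I_3 := @Ordinal 3 1 isT.
Definition i2 : 'I_3 := @Ordinal 3 2 isT.
Definition j0 : 'I_2 := @Ordinal 2 0 isT.
Definition j1 : 'I_2 := @Ordinal 2 1 isT.

Definition pt3 (a b c : R) : 'rV[R]_3 := \row_(i < 3) [:: a; b; c]`_i.
Definition pt2 (a b : R) : 'rV[R]_2 := \row_(i < 2) [:: a; b]`_i.

Definition rclosure {n} (A : 'rV[R]_n -> Prop) (x : 'rV[R]_n) : Prop :=
  forall e : R, 0 < e -> exists2 y, A y & forall i, `|x 0 i - y 0 i| < e.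

Definition convhull {n} (A : 'rV[R]_n -> Prop) (x : 'rV[R]_n) : Prop :=
  exists m (w : 'I_m -> R) (p : 'I_m -> 'rV[R]_n),
    [/\ forall j, 0 <= w j, \sum_j w j = 1, forall j, A (p j)
      & x = \sum_j w j *: p j].

Definition S_set (x : 'rV[R]_2) : Prop := cmp x j1 - cmp x j0 ^+ 2 >= 0.
Definition So_set (x : 'rV[R]_3) : Prop :=
  cmp x i0 * cmp x i2 - cmp x i1 ^+ 2 >= 0 /\ cmp x i0 > 0.
Definition Sc_set (x : 'rV[R]_3) : Prop :=
  cmp x i0 * cmp x i2 - cmp x i1 ^+ 2 >= 0 /\ cmp x i0 >= 0.

(* X2 is the outer variable, X1 the middle one, X0 the inner one. *)
Definition mpoly := {poly {poly {poly R}}}.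
Definition X0 : mpoly := ('X : {poly R})%:P%:P.
Definition X1 : mpoly := ('X : {poly {poly R}})%:P.
Definition X2 : mpoly := 'X.
Definition cst (a : R) : mpoly := a%:P%:P%:P.

Definition ev (p : mpoly) (a b c : R) : R := p.[c%:P%:P].[b%:P].[a].

(* total degree (the zero polynomial gets degree 0) *)
Definition tdeg1 (p : {poly R}) : nat := (size p).-1.
Definition tdeg2 (p : {poly {poly R}}) : nat :=
  \max_(i < size p) (i + tdeg1 p`_i)%N.
Definition tdeg (p : mpoly) : nat := \max_(i < size p) (i + tdeg2 p`_i)%N.

Definition sos (p : mpoly) : Prop :=
  exists s : seq mpoly, p = \sum_(q <- s) q ^+ 2.

(* truncated quadratic module Q_k(H), with h_0 = 1 *)
Definition Qmod (k : nat) (H : seq mpoly) (f : mpoly) : Prop :=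
  exists sig : 'I_(size H).+1 -> mpoly,
    [/\ forall j, sos (sig j),
        forall j, leq (tdeg (sig j * nth (1 : mpoly) (1 :: H) j)) (2 * k)%N
      & f = \sum_j sig j * nth (1 : mpoly) (1 :: H) j].

Definition linform (f : mpoly) : Prop :=
  exists a0 a1 a2 : R, f = cst a0 * X0 + cst a1 * X1 + cst a2 * X2.

Definition THk (k : nat) (H : seq mpoly) (x : 'rV[R]_2) : Prop :=
  forall l : mpoly, Qmod k H l -> linform l -> ev l 1 (cmp x j0) (cmp x j1) >= 0.

Definition Gt : seq mpoly :=
  [:: X0; X0 * X2 - X1 ^+ 2; X0 ^+ 2 + X1 ^+ 2 + X2 ^+ 2 - 1;
      1 - X0 ^+ 2 - X1 ^+ 2 - X2 ^+ 2].

End Defs.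

(* Main.v *)
Require Import Defs.
From HB Require Import structures.
From mathcomp Require Import all_boot all_order all_algebra.
From mathcomp Require Import ring lra.
Import Order.TTheory GRing.Theory Num.Theory.
Local Open Scope ring_scope.

Module PartA.

Section Ev.
Variable R : realFieldType.
Implicit Types p q : mpoly R.
Variables a b c : R.

Lemma evD p q : ev (p + q) a b c = ev p a b c + ev q a b c.
Proof. by rewrite /ev !hornerD. Qed.
Lemma evM p q : ev (p * q) a b c = ev p a b c * ev q a b c.
Proof. by rewrite /ev !hornerM. Qed.
Lemma evN p : ev (- p) a b c = - ev p a b c.
Proof. by rewrite /ev !hornerN. Qed.
Lemma ev0 : ev 0 a b c = 0.
Proof. by rewrite /ev !horner0. Qed.
Lemma ev1 : ev 1 a b c = 1.
Proof. by rewrite /ev !hornerC. Qed.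
Lemma evB p q : ev (p - q) a b c = ev p a b c - ev q a b c.
Proof. by rewrite evD evN. Qed.
Lemma evX2 p : ev (p ^+ 2) a b c = ev p a b c ^+ 2.
Proof. by rewrite !expr2 evM. Qed.
Lemma evx0 : ev (X0 R) a b c = a.
Proof. by rewrite /ev /X0 !hornerC hornerX. Qed.
Lemma evx1 : ev (X1 R) a b c = b.
Proof. by rewrite /ev /X1 hornerC hornerX hornerC. Qed.
Lemma evx2 : ev (X2 R) a b c = c.
Proof. by rewrite /ev /X2 hornerX !hornerC. Qed.
Lemma evc r : ev (cst r) a b c = r.
Proof. by rewrite /ev /cst !hornerC. Qed.
Lemma ev_seq (s : seq (mpoly R)) (F : mpoly R -> mpoly R) :
  ev (\sum_(q <- s) F q) a b c = \sum_(q <- s) ev (F q) a b c.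
Proof. exact: (big_morph (fun p => ev p a b c) evD ev0). Qed.
Lemma ev_ord n (F : 'I_n -> mpoly R) :
  ev (\sum_j F j) a b c = \sum_j ev (F j) a b c.
Proof. exact: (big_morph (fun p => ev p a b c) evD ev0). Qed.
Lemma sos_ge0 p : sos p -> 0 <= ev p a b c.
Proof.
case=> s ->; rewrite ev_seq; apply: sumr_ge0 => q _; rewrite evX2; exact: sqr_ge0.
Qed.

Lemma Qmod_ge0 k f : Qmod k (Gt R) f -> 0 <= a -> b ^+ 2 <= a * c ->
  a ^+ 2 + b ^+ 2 + c ^+ 2 = 1 -> 0 <= ev f a b c.
Proof.
case=> sig [Hs _ ->] ha hb hs; rewrite ev_ord; apply: sumr_ge0 => j _.
rewrite evM; apply: mulr_ge0; first exact: sos_ge0.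
case: j => [[|[|[|[|[|n]]]]] Hj] //=.
- by rewrite ev1.
- by rewrite evx0.
- by rewrite evB evM evx0 evx2 evX2 evx1 subr_ge0.
- by rewrite evB !evD !evX2 evx0 evx1 evx2 hs ev1 subrr.
- by rewrite !evB !evX2 evx0 evx1 evx2 ev1 -!addrA -!opprD addrA hs subrr.
Qed.
End Ev.

End PartA.
Import PartA.

Module PartB.

Lemma TH_all (R : realFieldType) k x : THk k (Gt R) x.
Proof.
move=> l Hq [a0 [a1 [a2 El]]].
have evl : forall a b c : R, ev l a b c = a0 * a + a1 * b + a2 * c.
  by move=> a b c; rewrite El !evD !evM !evc evx0 evx1 evx2.
have key : forall a b c D : R, 0 < D -> 0 <= a -> b ^+ 2 <= a * c ->
    a ^+ 2 + b ^+ 2 + c ^+ 2 = D ^+ 2 -> 0 <= a0 * a + a1 * b + a2 * c.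
  move=> a b c D hD ha hb hs.
  have hD0 : D != 0 by rewrite gt_eqF.
  have := @Qmod_ge0 R (a / D) (b / D) (c / D) k l Hq.
  rewrite evl.
  have -> : a0 * (a / D) + a1 * (b / D) + a2 * (c / D) = (a0 * a + a1 * b + a2 * c) / D by field.
  move=> H.
  have H2 : 0 <= (a0 * a + a1 * b + a2 * c) / D.
    apply: H; first by rewrite divr_ge0 // ltW.
      rewrite -subr_ge0.
      have -> : a / D * (c / D) - (b / D) ^+ 2 = (a * c - b ^+ 2) / D ^+ 2 by field.
      by rewrite divr_ge0 ?subr_ge0 // sqr_ge0.
    have -> : (a / D) ^+ 2 + (b / D) ^+ 2 + (c / D) ^+ 2 = (a ^+ 2 + b ^+ 2 + c ^+ 2) / D ^+ 2 by field.
    by rewrite hs divff // expf_neq0.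
  have -> : a0 * a + a1 * b + a2 * c = ((a0 * a + a1 * b + a2 * c) / D) * D by field.
  by rewrite mulr_ge0 // ltW.
have h2p : 0 <= a0 * 0 + a1 * 0 + a2 * 1 by apply: (key _ _ _ 1); rewrite ?expr0n ?expr1n /=; lra.
have h2n : 0 <= a0 * 0 + a1 * 0 + a2 * -1 by apply: (key _ _ _ 1); rewrite ?expr0n ?sqrrN ?expr1n /=; lra.
have h0 : 0 <= a0 * 1 + a1 * 0 + a2 * 0 by apply: (key _ _ _ 1); rewrite ?expr0n ?expr1n /=; lra.
have ha2 : a2 = 0 by lra.
have ha0 : 0 <= a0 by lra.
have ha1 : a1 = 0.
  apply/eqP; apply/negP => /negP ha1.
  pose v := - (3 * a0 + 1) / a1.
  have hv : a1 * v = - (3 * a0 + 1) by rewrite /v; field.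
  have := key 6 (2 * v) (8 + v ^+ 2) (10 + v ^+ 2).
  rewrite ha2 mul0r addr0.
  have hv2 : 0 <= v ^+ 2 := sqr_ge0 v.
  have -> : a1 * (2 * v) = 2 * (a1 * v) by ring.
  rewrite hv => H.
  have : 0 <= a0 * 6 + 2 * - (3 * a0 + 1).
    apply: H.
    - lra.
    - lra.
    - nra.
    - ring.
  lra.
rewrite /= evl ha1 ha2; lra.
Qed.

End PartB.
Import PartB.

Module PartC.
Set Implicit Arguments. Unset Strict Implicit.

Section C.
Variable R : realFieldType.

Lemma ord3P (P : 'I_3 -> Prop) : P (i0) -> P (i1) -> P (i2) -> forall i, P i.
Proof.
move=> p0 p1 p2 [[|[|[|n]]] Hn] //.
- by have -> : Ordinal Hn = i0 by apply: val_inj.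
- by have -> : Ordinal Hn = i1 by apply: val_inj.
- by have -> : Ordinal Hn = i2 by apply: val_inj.
Qed.

Lemma pt3E (a b c : R) :
  [/\ pt3 a b c 0 i0 = a, pt3 a b c 0 i1 = b & pt3 a b c 0 i2 = c].
Proof. by rewrite !mxE. Qed.

Lemma pt2E (a b : R) : pt2 a b 0 j0 = a /\ pt2 a b 0 j1 = b.
Proof. by rewrite !mxE. Qed.

Lemma rv3_ext (x : 'rV[R]_3) : x = pt3 (x 0 i0) (x 0 i1) (x 0 i2).
Proof.
apply/rowP; apply: ord3P; by rewrite mxE.
Qed.

Lemma sum_cmp n m (w : 'I_m -> R) (p : 'I_m -> 'rV[R]_n) i :
  (\sum_j w j *: p j) 0 i = \sum_j w j * p j 0 i.
Proof. by rewrite summxE; apply: eq_bigr => j _; rewrite mxE. Qed.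

Lemma convhull_self n (A : 'rV[R]_n -> Prop) x : A x -> convhull A x.
Proof.
move=> Ax; exists 1%N, (fun _ => 1), (fun _ => x); split => //; rewrite ?big_ord1 ?scale1r //.
Qed.

Lemma convhull_mono n (A B : 'rV[R]_n -> Prop) x :
  (forall y, A y -> B y) -> convhull A x -> convhull B x.
Proof. by move=> AB [m [w [p [h1 h2 h3 h4]]]]; exists m, w, p; split => // j; apply: AB. Qed.

Lemma rclosure_mono n (A B : 'rV[R]_n -> Prop) x :
  (forall y, A y -> B y) -> rclosure A x -> rclosure B x.
Proof. by move=> AB H e he; have [y Ay Hy] := H e he; exists y => //; apply: AB. Qed.

Lemma rclosure_self n (A : 'rV[R]_n -> Prop) x : A x -> rclosure A x.
Proof. by move=> Ax e he; exists x => // i; rewrite subrr normr0. Qed.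

Definition P3 (x : 'rV[R]_3) : Prop :=
  [/\ 0 <= x 0 i0, 0 <= x 0 i2 & x 0 i1 ^+ 2 <= x 0 i0 * x 0 i2].

Lemma P3_quad x : P3 x <-> forall s t : R,
  0 <= x 0 i0 * s ^+ 2 + x 0 i1 * (2 * s * t) + x 0 i2 * t ^+ 2.
Proof.
rewrite /P3; set a := x 0 i0; set b := x 0 i1; set c := x 0 i2.
split.
  case=> ha hc hb s t.
  have [a0|ha0] := eqVneq a 0.
    rewrite a0 mul0r in hb; rewrite a0.
    have -> : b = 0 by apply/eqP; rewrite -sqrf_eq0 eq_le sqr_ge0 andbT.
    by rewrite !mul0r !add0r mulr_ge0 // sqr_ge0.
  have ha' : 0 < a by rewrite lt_def ha0 ha.
  have h : 0 <= a * (a * s ^+ 2 + b * (2 * s * t) + c * t ^+ 2).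
    have -> : a * (a * s ^+ 2 + b * (2 * s * t) + c * t ^+ 2) =
      (a * s + b * t) ^+ 2 + (a * c - b ^+ 2) * t ^+ 2 by ring.
    by rewrite addr_ge0 ?sqr_ge0 // mulr_ge0 ?sqr_ge0 // subr_ge0.
  by rewrite -(pmulr_rge0 _ ha').
move=> H.
have ha : 0 <= a by have := H 1 0; rewrite ?(expr1n, expr0n, mulr0, mul0r, mulr1, addr0, add0r).
have hc : 0 <= c by have := H 0 1; rewrite ?(expr1n, expr0n, mulr0, mul0r, mulr1, addr0, add0r).
split => //.
have [a0|ha0] := eqVneq a 0.
  rewrite a0 mul0r.
  have := H (- (c + 1) * b) (2 * b ^+ 2).
  rewrite a0 mul0r add0r => h.
  have : 0 <= - 4 * b ^+ 4.
    by apply: (le_trans h); rewrite le_eqVlt; apply/orP; left; apply/eqP; ring.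
  have hb4 : b ^+ 4 = (b ^+ 2) ^+ 2 by rewrite -exprM.
  nra.
have ha' : 0 < a by rewrite lt_def ha0 ha.
have := H b (- a).
have -> : a * b ^+ 2 + b * (2 * b * - a) + c * (- a) ^+ 2 = a * (a * c - b ^+ 2) by ring.
by rewrite pmulr_rge0 // subr_ge0.
Qed.
End C.

Section C2.
Variable R : realFieldType.

Lemma P3_convex (x : 'rV[R]_3) : convhull (@P3 R) x -> P3 x.
Proof.
case=> m [w [p [hw hs hp ->]]]; apply/P3_quad => s t.
rewrite !sum_cmp !mulr_suml -!big_split /=; apply: sumr_ge0 => j _.
have := proj1 (P3_quad (p j)) (hp j) s t => h.
have -> : w j * p j 0 i0 * s ^+ 2 + w j * p j 0 i1 * (2 * s * t) + w j * p j 0 i2 * t ^+ 2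
  = w j * (p j 0 i0 * s ^+ 2 + p j 0 i1 * (2 * s * t) + p j 0 i2 * t ^+ 2) by ring.
exact: mulr_ge0.
Qed.

Lemma sq_lb (b y e B : R) : 0 <= B -> (B = b \/ B = - b) ->
  - e < b - y < e -> e <= B -> (B - e) ^+ 2 < y ^+ 2.
Proof. move=> hB [->|->] /andP[h1 h2] heB; nra. Qed.

Lemma absP (b : R) : exists B, [/\ 0 <= B, B = b \/ B = - b & B ^+ 2 = b ^+ 2].
Proof.
have [hb|hb] := lerP 0 b; first by exists b; split; [|left|].
by exists (- b); split; [lra|right|rewrite sqrrN].
Qed.

Lemma pos_div (d S : R) : 0 < d -> 0 < S -> exists2 e, 0 < e & e * S = d.
Proof.
move=> hd hS; exists (d / S); first by rewrite divr_gt0.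
by rewrite divfK // gt_eqF.
Qed.

Lemma P3_closed (x : 'rV[R]_3) : rclosure (@P3 R) x -> P3 x.
Proof.
move=> H.
have ha : 0 <= x 0 i0.
  rewrite leNgt; apply/negP => hneg.
  have := H (- x 0 i0); rewrite oppr_gt0 => /(_ hneg) [y [hy0 _ _] Hy].
  have := Hy i0; rewrite ltr_norml => /andP[h1 h2]; lra.
have hc : 0 <= x 0 i2.
  rewrite leNgt; apply/negP => hneg.
  have := H (- x 0 i2); rewrite oppr_gt0 => /(_ hneg) [y [_ hy2 _] Hy].
  have := Hy i2; rewrite ltr_norml => /andP[h1 h2]; lra.
split => //.
rewrite leNgt; apply/negP => hd.
set a := x 0 i0 in ha hd *; set b := x 0 i1 in hd *; set c := x 0 i2 in hc hd *.
have [B [hB0 hBb hB2]] := absP b.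
have hac : 0 <= a * c by exact: mulr_ge0.
have hBp : 0 < B.
  rewrite lt_def hB0 andbT; apply/negP => /eqP B0.
  by move: hB2; rewrite B0 expr0n /= => hb; lra.
have [e he heS] := @pos_div (b ^+ 2 - a * c) (a + c + 2 * B) ltac:(lra) ltac:(lra).
have heB : e <= B.
  rewrite leNgt; apply/negP => hBe.
  have : e * (a + c + 2 * B) >= e * (2 * B) by nra.
  nra.
have [y [hy0 hy2 hy1] Hy] := H e he.
have := Hy i0; rewrite ltr_norml => /andP[h01 h02].
have := Hy i1; rewrite ltr_norml => /andP[h11 h12].
have := Hy i2; rewrite ltr_norml => /andP[h21 h22].
rewrite -/a in h01 h02; rewrite -/b in h11 h12; rewrite -/c in h21 h22.
have hby : - e < b - y 0 i1 < e by rewrite h11 h12.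
have hlb := sq_lb hB0 hBb hby heB.
have p1 : 0 <= (a + e - y 0 i0) * y 0 i2 by apply: mulr_ge0; lra.
have p2 : 0 <= (c + e - y 0 i2) * (a + e) by apply: mulr_ge0; lra.
nra.
Qed.

Lemma P3_approx (x : 'rV[R]_3) : P3 x -> rclosure (@So_set R) x.
Proof.
case=> ha hc hb e he.
exists (pt3 (x 0 i0 + e / 2) (x 0 i1) (x 0 i2 + e / 2)).
  rewrite /So_set /cmp !mxE /=.
  have he2 : 0 < e / 2 by rewrite divr_gt0.
  split; last by lra.
  rewrite subr_ge0; nra.
have he2 : 0 < e / 2 by rewrite divr_gt0.
have he2' : e / 2 < e by lra.
apply: ord3P; rewrite !mxE /=.
- by rewrite opprD addrA subrr add0r normrN gtr0_norm.
- by rewrite subrr normr0.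
- by rewrite opprD addrA subrr add0r normrN gtr0_norm.
Qed.

Lemma So_P3 (x : 'rV[R]_3) : So_set x -> P3 x.
Proof.
rewrite /So_set /cmp; case=> h1 h0; have h2 : 0 <= x 0 i2 by nra.
split; [lra|lra|lra].
Qed.

Lemma clSo_P3 (x : 'rV[R]_3) : rclosure (@So_set R) x <-> P3 x.
Proof.
split; last exact: P3_approx.
by move=> H; apply: P3_closed; apply: rclosure_mono H; exact: So_P3.
Qed.
End C2.

Section C3.
Variable R : realFieldType.

Lemma S_quad (x : 'rV[R]_2) : S_set x <-> forall t : R,
  0 <= x 0 j1 + x 0 j0 * (- 2 * t) + t ^+ 2.
Proof.
rewrite /S_set /cmp; split.
  move=> h t.
  have -> : x 0 j1 + x 0 j0 * (- 2 * t) + t ^+ 2 =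
    (x 0 j1 - x 0 j0 ^+ 2) + (x 0 j0 - t) ^+ 2 by ring.
  by rewrite addr_ge0 // sqr_ge0.
move=> H; have := H (x 0 j0).
have -> : x 0 j1 + x 0 j0 * (- 2 * x 0 j0) + x 0 j0 ^+ 2 = x 0 j1 - x 0 j0 ^+ 2 by ring.
by [].
Qed.

Lemma S_convex (x : 'rV[R]_2) : convhull (@S_set R) x -> S_set x.
Proof.
case=> m [w [p [hw hs hp ->]]]; apply/S_quad => t.
have ht : t ^+ 2 = \sum_j w j * t ^+ 2 by rewrite -mulr_suml hs mul1r.
rewrite ht !sum_cmp !mulr_suml -!big_split /=; apply: sumr_ge0 => j _.
have := proj1 (S_quad (p j)) (hp j) t => h.
have -> : w j * p j 0 j1 + w j * p j 0 j0 * (- 2 * t) + w j * t ^+ 2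
  = w j * (p j 0 j1 + p j 0 j0 * (- 2 * t) + t ^+ 2) by ring.
exact: mulr_ge0.
Qed.

Lemma S_closed (x : 'rV[R]_2) : rclosure (@S_set R) x -> S_set x.
Proof.
move=> H; rewrite /S_set /cmp.
rewrite leNgt; apply/negP => hd.
have [B [hB0 hBb hB2]] := absP (x 0 j0).
have [e he heS] := @pos_div R (x 0 j0 ^+ 2 - x 0 j1) (1 + 2 * B) ltac:(lra) ltac:(lra).
have [y hy Hy] := H e he.
move: hy; rewrite /S_set /cmp => hy.
have := Hy j0; rewrite ltr_norml => /andP[h01 h02].
have := Hy j1; rewrite ltr_norml => /andP[h11 h12].
have hm : x 0 j0 * (y 0 j0 - x 0 j0) >= - (B * e).
  by case: hBb => hB; nra.
have hq : y 0 j0 ^+ 2 >= x 0 j0 ^+ 2 - 2 * (B * e).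
  have := sqr_ge0 (y 0 j0 - x 0 j0); nra.
have heS' : e + 2 * (B * e) = x 0 j0 ^+ 2 - x 0 j1 by rewrite -heS; ring.
lra.
Qed.

Lemma clconvS (x : 'rV[R]_2) : rclosure (convhull (@S_set R)) x <-> S_set x.
Proof.
split.
  by move=> H; apply: S_closed; apply: rclosure_mono H; exact: S_convex.
by move=> h; apply: rclosure_self; apply: convhull_self.
Qed.
End C3.

End PartC.
Import PartC.

Theorem mainTheorem18 (R : realFieldType) :
  let K := convhull (rclosure (@So_set R)) in
  [/\ (* X0 + X2 > 0 on convhull(cl So) \ {0} *)
      (forall x, K x -> x <> 0 -> cmp x i0 + cmp x i2 > 0),
      (* hence K is closed and pointed *)
      (forall x, rclosure K x -> K x) /\ (forall x, K x -> K (- x) -> x = 0),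
      (* Sc \ cl So = {(0,0,x2) : x2 < 0}, nonempty *)
      (forall x, (Sc_set x /\ ~ rclosure (@So_set R) x) <->
                 exists2 c : R, c < 0 & x = pt3 0 0 c)
      /\ (exists x, Sc_set x /\ ~ rclosure (@So_set R) x)
      (* S is not closed at infinity *)
      /\ ~ (forall x, rclosure (@So_set R) x <-> Sc_set x),
      (* TH_k(Gt) = R^2 for all k >= 1 *)
      (forall k, (1 <= k)%N -> forall x, THk k (Gt R) x)
    & (* cl(convhull S) = S, and the intersection of the TH_k differs from it *)
      (forall x, rclosure (convhull (@S_set R)) x <-> S_set x) /\
      ~ (forall x, (forall k, (1 <= k)%N -> THk k (Gt R) x) <->
                   rclosure (convhull (@S_set R)) x)].
Proof.
move=> K.
have KP : forall x, K x <-> P3 x.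
  move=> x; split.
    move=> h; apply: P3_convex; apply: convhull_mono h => y; exact: (proj1 (clSo_P3 y)).
  by move=> h; apply: convhull_self; apply/clSo_P3.
have pos : forall x, K x -> x <> 0 -> 0 < cmp x i0 + cmp x i2.
  move=> x /KP [ha hc hb] hx; rewrite /cmp lt_def addr_ge0 // andbT.
  apply/eqP => h0; apply: hx.
  have a0 : x 0 i0 = 0 by lra.
  have c0 : x 0 i2 = 0 by lra.
  have b0 : x 0 i1 = 0.
    by apply/eqP; rewrite -sqrf_eq0 eq_le sqr_ge0 andbT; move: hb; rewrite a0 mul0r.
  rewrite (rv3_ext x) a0 b0 c0; apply/rowP; apply: ord3P; by rewrite !mxE.
have P3c : forall x, (Sc_set x /\ ~ rclosure (@So_set R) x) <->
                 exists2 c : R, c < 0 & x = pt3 0 0 c.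
  move=> x; split.
    case=> [[hsc hs0] hn].
    have hn' : ~ P3 x by move=> p; apply: hn; apply/clSo_P3.
    move: hsc hs0; rewrite /cmp => hsc hs0.
    have hc : x 0 i2 < 0.
      rewrite ltNge; apply/negP => hc; apply: hn'; split => //; lra.
    have a0 : x 0 i0 = 0 by nra.
    have b0 : x 0 i1 = 0.
      by apply/eqP; rewrite -sqrf_eq0 eq_le sqr_ge0 andbT; nra.
    by exists (x 0 i2) => //; rewrite {1}(rv3_ext x) a0 b0.
  case=> c hc ->; split.
    by rewrite /Sc_set /cmp !mxE /=; split; lra.
  by move/clSo_P3 => [_ h _]; move: h; rewrite mxE /=; lra.
have ex : Sc_set (pt3 0 0 (-1 : R)) /\ ~ rclosure (@So_set R) (pt3 0 0 (-1)).
  by apply/P3c; exists (-1) => //; rewrite oppr_lt0 ltr01.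
split.
- exact: pos.
- split.
    move=> x hx; apply/KP; apply: P3_closed; apply: rclosure_mono hx => y /KP //.
  move=> x h1 h2; have [//|hx0] := eqVneq x 0; have hx : x <> 0 by apply/eqP.
  have p1 := pos x h1 hx.
  have hx' : - x <> 0 by move=> /eqP; rewrite oppr_eq0 => /eqP.
  exfalso; have := pos (- x) h2 hx'; rewrite /cmp !mxE in p1 *; lra.
- split; first exact: P3c.
  split; first by exists (pt3 0 0 (-1)).
  move=> H; case: ex => h1 h2; apply: h2; exact/H.
- by move=> k _ x; exact: TH_all.
- split; first exact: clconvS.
  move=> H; have := proj1 (H (pt2 0 (-1))) (fun k _ => TH_all _ _ _).
  by move/clconvS; rewrite /S_set /cmp !mxE /=; lra.
Qed.
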